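(* Let $f:\{0,1\}^n\to\{0,1\}$ be total, $\epsilon\in[0,1/2)$, and $q$ a real polynomial with $q(x)\in[1-2\epsilon,1]$ whenever $f(x)=1$ and $q(x)\in[-1,-1+2\epsilon]$ whenever $f(x)=0$. Define the $2^n\times2^n$ matrix $B_q$ by $(B_q)_{xy}=\tfrac12(q(x)-q(y))$ if $|x\oplus y|=1$ and $(B_q)_{xy}=0$ otherwise. Then $\lambda(f)\le\frac{1}{1-2\epsilon}\|B_q\|$.
   Context: $|x\oplus y|$ is the Hamming distance. The sensitivity graph $G_f$ has vertex set $\{0,1\}^n$ and an edge between $x,y$ iff they differ in exactly one coordinate and $f(x)\ne f(y)$; $A_f$ is its adjacency matrix and $\lambda(f)=\|A_f\|$ (spectral norm). *)

(* Defs.v *)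
From HB Require Import structures.
From mathcomp Require Import all_boot all_order all_algebra.
From mathcomp Require Import classical_sets reals.
From mathcomp Require mpoly.
Set Implicit Arguments. Unset Strict Implicit. Unset Printing Implicit Defensive.
Import Order.TTheory GRing.Theory Num.Theory.
Local Open Scope ring_scope.

Definition cube (n : nat) := {ffun 'I_n -> bool}.

Definition hamming n (x y : cube n) : nat := #|[set i | x i != y i]|.

Definition cube_pt (R : ringType) n (x : cube n) : 'I_n -> R :=
  fun i => (x i)%:R.

Definition mxapp (R : ringType) (T : finType) (A : T -> T -> R) (v : T -> R)
  : T -> R := fun x => \sum_(y : T) A x y * v y.

Definition enorm (R : realType) (T : finType) (v : T -> R) : R :=
  Num.sqrt (\sum_(x : T) v x ^+ 2).

Definition spec_norm (R : realType) (T : finType) (A : T -> T -> R) : R :=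
  sup [set enorm (mxapp A v) | v in [set v : T -> R | enorm v <= 1]]%classic.

Definition sens_adj (R : ringType) n (f : cube n -> bool) : cube n -> cube n -> R :=
  fun x y => if (hamming x y == 1%N) && (f x != f y) then 1 else 0.

Definition lambda_f (R : realType) n (f : cube n -> bool) : R :=
  spec_norm (sens_adj R f).

Definition Bmat (R : fieldType) n (qv : cube n -> R) : cube n -> cube n -> R :=
  fun x y => if hamming x y == 1%N then (qv x - qv y) / 2 else 0.

(* Main.v *)
Require Import Defs.
From HB Require Import structures.
From mathcomp Require Import all_boot all_order all_algebra.
From mathcomp Require Import classical_sets reals.
From mathcomp Require mpoly.
From mathcomp Require Import lra.
Import Order.TTheory GRing.Theory Num.Theory.
Local Open Scope ring_scope.

Set Implicit Arguments. Unset Strict Implicit.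
Section Gen.
Variables (R : realType) (T : finType).
Implicit Types (v w : T -> R) (M : T -> T -> R).

Definition sq v : R := \sum_(x : T) v x ^+ 2.

Lemma sq_ge0 v : 0 <= sq v.
Proof. by apply: sumr_ge0 => x _; rewrite sqr_ge0. Qed.

Lemma enormE v : enorm v = Num.sqrt (sq v).
Proof. by []. Qed.

Lemma enorm_ge0 v : 0 <= enorm v.
Proof. exact: sqrtr_ge0. Qed.

Lemma sq_enorm v : enorm v ^+ 2 = sq v.
Proof. by rewrite enormE sqr_sqrtr // sq_ge0. Qed.

Lemma coord_le v y : v y ^+ 2 <= sq v.
Proof.
rewrite /sq (bigD1 y) //= lerDl; apply: sumr_ge0 => x _; exact: sqr_ge0.
Qed.

Lemma enorm_le1 v : enorm v <= 1 -> sq v <= 1.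
Proof.
move=> h; rewrite -sq_enorm -(expr1n _ 2%N).
by rewrite ler_sqr // nnegrE ?enorm_ge0.
Qed.

Lemma coord_le1 v y : enorm v <= 1 -> `|v y| <= 1.
Proof.
move=> h; have h1 := le_trans (coord_le v y) (enorm_le1 h).
rewrite -(ler_sqr (R:=R)) ?nnegrE ?normr_ge0 ?ler01 //.
by rewrite real_normK ?num_real // expr1n.
Qed.

Definition Sset M := [set enorm (mxapp M v) | v in [set v : T -> R | enorm v <= 1]]%classic.

Lemma Sset_sup M : has_sup (Sset M).
Proof.
split.
  exists (enorm (mxapp M (fun _ => 0))); exists (fun _ => 0) => //=.
  by rewrite /enorm big1 ?sqrtr0 // => x _; rewrite expr0n.
exists (Num.sqrt (\sum_x (\sum_y `|M x y|) ^+ 2)) => _ [v /= hv <-].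
rewrite enormE ler_sqrt; last by apply: sumr_ge0 => x _; rewrite sqr_ge0.
apply: ler_sum => x _.
rewrite -real_normK ?num_real //.
rewrite ler_sqr ?nnegrE ?normr_ge0 //; last by apply: sumr_ge0 => y _.
apply: le_trans (ler_norm_sum _ _ _) _; apply: ler_sum => y _.
rewrite normrM; apply: ler_piMr => //; exact: coord_le1.
Qed.

Lemma spec_ge0 M : 0 <= spec_norm M.
Proof.
have z : enorm (fun _ : T => (0:R)) = 0.
  by rewrite /enorm big1 ?sqrtr0 // => x _; rewrite expr0n.
apply: le_trans (enorm_ge0 (mxapp M (fun _ => 0))) _.
by apply: (sup_upper_bound (Sset_sup M)); exists (fun _ => 0) => //=; rewrite z.
Qed.

Lemma spec_bound M w : enorm (mxapp M w) <= spec_norm M * enorm w.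
Proof.
have [t0|tpos] := eqVneq (enorm w) 0.
  have w0 : forall y, w y = 0.
    move=> y; apply/eqP; rewrite -sqrf_eq0 eq_le sqr_ge0 andbT.
    by have := coord_le w y; rewrite -(sq_enorm w) t0 expr0n.
  rewrite t0 mulr0 /enorm /mxapp big1 ?sqrtr0 // => x _.
  by rewrite big1 ?expr0n // => y _; rewrite w0 mulr0.
set t := enorm w.
have tgt : 0 < t by rewrite lt_def tpos enorm_ge0.
pose w' := fun y => t^-1 * w y.
have e1 : enorm w' <= 1.
  rewrite enormE /sq /w'.
  under eq_bigr => y _ do rewrite exprMn.
  by rewrite -mulr_sumr -/(sq w) -sq_enorm -/t -exprMn mulVf // expr1n sqrtr1.
have h : enorm (mxapp M w') <= spec_norm M.
  by apply: sup_upper_bound (Sset_sup M) _ _; exists w'.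
have : enorm (mxapp M w') = t^-1 * enorm (mxapp M w).
  rewrite !enormE /sq /mxapp /w'.
  under eq_bigr => x _ do (under eq_bigr => y _ do rewrite mulrCA; rewrite -mulr_sumr exprMn).
  rewrite -mulr_sumr sqrtrM ?sqr_ge0 // sqrtr_sqr ger0_norm //.
  by rewrite invr_ge0 ltW.
move=> e; rewrite e in h.
by rewrite mulrC -ler_pdivrMl.
Qed.

Lemma sq_bound M w : sq (mxapp M w) <= spec_norm M ^+ 2 * sq w.
Proof.
rewrite -!sq_enorm -exprMn ler_sqr ?nnegrE ?enorm_ge0 ?spec_bound //.
by rewrite mulr_ge0 ?spec_ge0 ?enorm_ge0.
Qed.

End Gen.
Unset Implicit Arguments.

Theorem lemma4p13 (R : realType) (n : nat) (f : cube n -> bool) (eps : R)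
  (q : mpoly.mpoly n R) :
  0 <= eps -> eps < 1 / 2 ->
  (forall x : cube n, f x ->
     1 - 2 * eps <= mpoly.meval (cube_pt R x) q <= 1) ->
  (forall x : cube n, ~~ f x ->
     -1 <= mpoly.meval (cube_pt R x) q <= -1 + 2 * eps) ->
  lambda_f R f <=
    (1 - 2 * eps)^-1 * spec_norm (Bmat (fun x => mpoly.meval (cube_pt R x) q)).
Proof.
move=> e0 e1 H1 H0.
set qv := (fun x => mpoly.meval (cube_pt R x) q).
set B := Bmat qv.
set N := spec_norm B.
set c := 1 - 2 * eps.
have cpos : 0 < c by rewrite /c; lra.
have Q1 : forall x, f x -> c <= qv x by move=> x /H1 /andP [].
have Q0 : forall x, ~~ f x -> qv x <= - c.
  by move=> x /H0 /andP [_ h]; rewrite /c opprB addrC.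
rewrite /lambda_f; apply: ge_sup; first by have [ne _] := @Sset_sup R _ (sens_adj R f).
move=> _ [v /= hv <-].
rewrite ler_pdivlMl //.
set A := sens_adj R f.
pose w1 := fun y => if f y then 0 else `|v y|.
pose w0 := fun y => if f y then `|v y| else 0.
have pt : forall x, c ^+ 2 * (mxapp A v x) ^+ 2 <=
    (mxapp B w1 x) ^+ 2 + (mxapp B w0 x) ^+ 2.
  move=> x; rewrite -exprMn -real_normK ?num_real // normrM (gtr0_norm cpos).
  have key : c * `|mxapp A v x| <=
      if f x then mxapp B w1 x else - mxapp B w0 x.
    apply: le_trans (_ : c * \sum_y `|A x y * v y| <= _).
      by rewrite ler_pM2l // ler_norm_sum.
    rewrite mulr_sumr; case hx: (f x); rewrite ?/mxapp -?sumrN;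
      apply: ler_sum => y _; rewrite /A /B /sens_adj /Bmat /w1 /w0 hx;
      case: (hamming x y == 1%N) => /=; rewrite ?mul0r ?normr0 ?mulr0 ?oppr0 //;
      case hy: (f y) => /=; rewrite ?mul0r ?mulr0 ?normr0 ?oppr0 ?mul1r //.
    all: rewrite ?mulr0 //.
    - have a := Q1 x hx; have b := Q0 y (negbT hy).
      apply: ler_wpM2r => //; lra.
    - have a := Q0 x (negbT hx); have b := Q1 y hy.
      rewrite -mulNr; apply: ler_wpM2r => //; lra.
  have k0 : 0 <= c * `|mxapp A v x| by rewrite mulr_ge0 ?normr_ge0 // ltW.
  case hx: (f x) key => key.
    apply: (@le_trans _ _ (mxapp B w1 x ^+ 2)); last by rewrite lerDl sqr_ge0.
    by rewrite ler_sqr // nnegrE //; apply: le_trans key.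
  apply: (@le_trans _ _ (mxapp B w0 x ^+ 2)); last by rewrite lerDr sqr_ge0.
  by rewrite -[mxapp B w0 x ^+ 2]sqrrN ler_sqr ?nnegrE //; apply: le_trans key.
have sqv : sq w1 + sq w0 = sq v.
  rewrite /sq -big_split /=; apply: eq_bigr => y _; rewrite /w1 /w0.
  by case: (f y); rewrite expr0n /= ?add0r ?addr0 real_normK ?num_real.
have tot : c ^+ 2 * sq (mxapp A v) <= N ^+ 2.
  apply: le_trans (_ : sq (mxapp B w1) + sq (mxapp B w0) <= _).
    by rewrite /sq mulr_sumr -big_split; apply: ler_sum => x _; exact: pt.
  apply: le_trans (lerD (sq_bound B w1) (sq_bound B w0)) _.
  rewrite -mulrDr sqv -[X in _ <= X]mulr1 ler_wpM2l ?sqr_ge0 //.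
  exact: enorm_le1.
move: tot; rewrite -sq_enorm -exprMn ler_sqr // nnegrE ?spec_ge0 //.
by rewrite mulr_ge0 ?enorm_ge0 ?ltW.
Qed.
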